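(* Let $n\in\mathbb{N}$. The space $\mathcal{C}^n[a,b]$ consists exactly of those functions $f$ on $[a,b]$ that can be represented in the form $$f(x)=\frac{1}{(n-1)!}\int_a^x(x-t)^{n-1}\phi(t)\,dt+\sum_{k=0}^{n-1}c_k(x-a)^k,\qquad x\in[a,b],$$ where $\phi\in D_{HK}$ and $c_0,\dots,c_{n-1}$ are arbitrary real constants.
   Context: Fix real numbers $a<b$. Let $C_0=\{F\in C[a,b]:F(a)=0\}$. A distribution $\phi$ on $(a,b)$ is Henstock–Kurzweil integrable if $\phi=F'$ (distributional derivative) for some (unique) $F\in C_0$; its distributional Henstock–Kurzweil integral is $\int_c^d \phi=F(d)-F(c)$, and integrals of $\phi$ against functions of bounded variation (such as $t\mapsto(x-t)^{n-1}$) are defined via $\int_a^x\phi g=F(x)g(x)-\int_a^xF\,dg$. $D_{HK}$ denotes the space of such distributions. For $n\in\mathbb{N}$, $\mathcal{C}^n[a,b]$ is the set of functions $F$ on $[a,b]$ whose classical derivative $F^{(n-1)}=\left(\frac{d}{dx}\right)^{n-1}F$ exists and is continuous on $[a,b]$ (so $\mathcal{C}^1[a,b]=C[a,b]$). *)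

(* Defs.v *)
From HB Require Import structures.
From mathcomp Require Import all_boot all_order all_algebra.
From mathcomp Require Import all_classical all_reals all_analysis.
Set Implicit Arguments. Unset Strict Implicit. Unset Printing Implicit Defensive.
Import Order.TTheory GRing.Theory Num.Theory.
Import numFieldNormedType.Exports.
Local Open Scope classical_set_scope.
Local Open Scope ring_scope.

Section Defs.
Variable R : realType.

Definition cI (a b : R) : set R := [set x | a <= x <= b].

(* d is the (classical, one-sided at the endpoints) derivative of f at x,
   relative to [a,b] *)
Definition deriv_within (a b : R) (f : R -> R) (x d : R) : Prop :=
  (fun y => (f y - f x) / (y - x)) @ within (cI a b) (x^') --> d.

(* C^n[a,b]: F^(n-1) exists (classically, on [a,b]) and is continuous on [a,b].
   D k plays the role of F^(k). *)
Definition Cn (a b : R) (n : nat) (f : R -> R) : Prop :=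
  exists D : nat -> R -> R,
    D 0%N = f /\
    (forall k : nat, (k.+1 < n)%N ->
       forall x, cI a b x -> deriv_within a b (D k) x (D k.+1 x)) /\
    {within cI a b, continuous (D n.-1)}.

Definition C0 (a b : R) (F : R -> R) : Prop :=
  {within cI a b, continuous F} /\ F a = 0.

Definition test_fun (a b : R) (psi : R -> R) : Prop :=
  (forall (k : nat) (x : R), derivable (derive1n k psi) x 1) /\
  exists c d : R, a < c /\ c <= d /\ d < b /\
    forall x, (x < c \/ d < x) -> psi x = 0.

(* distributions on (a,b) are represented as functionals on test functions;
   phi = F' in the distributional sense *)
Definition distr_deriv_of (a b : R) (phi : (R -> R) -> R) (F : R -> R) : Prop :=
  forall psi, test_fun a b psi ->
    phi psi = - \int[lebesgue_measure]_(t in cI a b) (F t * derive1 psi t).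

Definition D_HK (a b : R) (phi : (R -> R) -> R) : Prop :=
  exists F, C0 a b F /\ distr_deriv_of a b phi F.

(* int_a^x phi g := F(x) g(x) - int_a^x F dg, for g continuously
   differentiable with derivative dg' (Stieltjes integral written as
   int_a^x F g'), where F is the primitive of phi in C_0. *)
Definition HK_int_against (a x : R) (F g g' : R -> R) : R :=
  F x * g x - \int[lebesgue_measure]_(t in cI a x) (F t * g' t).

End Defs.

(* Main.v *)
Require Import Defs.
From HB Require Import structures.
From mathcomp Require Import all_boot all_order all_algebra.
From mathcomp Require Import all_classical all_reals all_analysis.
From mathcomp Require Import ring lra.
Import Order.TTheory GRing.Theory Num.Theory.
Import numFieldNormedType.Exports.
Local Open Scope classical_set_scope.
Local Open Scope ring_scope.

Module P1.
Section S1.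
Variable R : realType.
Variables a b : R.
Hypothesis hab : a < b.
Local Notation A := (cI a b).
Local Notation Dw := (deriv_within a b).
Implicit Types (f g : R -> R) (x y c d df dg : R).

Lemma cI_itv (x y : R) : cI x y = [set` `[x, y]].
Proof. by rewrite /cI; apply/seteqP; split => t /=; rewrite in_itv. Qed.

Lemma withinNx_le (x : R) (P : set R) :
  within A (nbhs x) P -> within A x^' P.
Proof.
by rewrite /within /= => H; apply: cvg_within.
Qed.

Lemma within_Nx (x : R) (P : set R) : P x ->
  within A x^' P -> within A (nbhs x) P.
Proof.
move=> Px; rewrite /within /= /dnbhs /within /=; apply: (@filterS R (nbhs x)) => y /= H Ay.
by have [->//|yx] := eqVneq y x; apply: H.
Qed.

Lemma cvg_within_Nx (g : R -> R) x l : g x = l ->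
  g @ within A x^' --> l -> g @ within A (nbhs x) --> l.
Proof.
move=> gx H U /= hU; apply: within_Nx; last exact: H.
by rewrite /= gx; apply: nbhs_singleton.
Qed.


Lemma WF x : Filter (within A x^').
Proof. by apply: within_filter; apply: Proper_dnbhs_numFieldType. Qed.

Lemma near_withinNx (x : R) (P : set R) :
  (forall y, y != x -> A y -> P y) -> within A x^' P.
Proof.
move=> H; rewrite /within /= /dnbhs /within /=.
by apply: (@filterE R (nbhs x)) => y /= yx Ay; apply: H.
Qed.

Lemma Dw_full f x d : is_derive x 1 f d -> Dw f x d.
Proof.
move=> /is_derive1_caratheodory [g [fE cg gx]].
rewrite /deriv_within.
have : g @ within A x^' --> d.
  by rewrite -gx; apply: cvg_within_filter; exact/continuous_withinNx.
apply: cvg_trans; apply: near_eq_cvg; apply: near_withinNx => y yx _.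
by rewrite fE mulfK // subr_eq0.
Qed.

Lemma Dw_eq f g x d : (forall y, A y -> f y = g y) -> A x ->
  Dw g x d -> Dw f x d.
Proof.
move=> fg Ax; rewrite /deriv_within; apply: cvg_trans; apply: near_eq_cvg.
by apply: near_withinNx => y yx Ay; rewrite !fg.
Qed.

Lemma Dw_cst c x : Dw (fun _ => c) x 0.
Proof.
rewrite /deriv_within.
have : (cst (0:R)) @ within A x^' --> (0:R) by apply: cvg_cst.
apply: cvg_trans; apply: near_eq_cvg.
by apply: near_withinNx => y yx Ay; rewrite /= subrr mul0r.
Qed.

Lemma Dw_id x : Dw id x 1.
Proof.
rewrite /deriv_within.
have : (cst (1:R)) @ within A x^' --> (1:R) by apply: cvg_cst.
apply: cvg_trans; apply: near_eq_cvg.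
by apply: near_withinNx => y yx Ay; rewrite divff // subr_eq0.
Qed.

Lemma Dw_add f g x df dg : Dw f x df -> Dw g x dg ->
  Dw (fun y => f y + g y) x (df + dg).
Proof.
move=> hf hg; rewrite /deriv_within; have := cvgD hf hg; move/(_ (WF x)).
apply: cvg_trans; apply: near_eq_cvg.
by apply: near_withinNx => y yx Ay; rewrite !fctE -mulrDl; congr (_ / _); ring.
Qed.

Lemma Dw_scale c f x df : Dw f x df -> Dw (fun y => c * f y) x (c * df).
Proof.
move=> hf; rewrite /deriv_within; have := @cvgMl_tmp _ _ _ (WF x) _ c _ hf.
apply: cvg_trans; apply: near_eq_cvg.
by apply: near_withinNx => y yx Ay; rewrite -mulrBr mulrA.
Qed.

Lemma idW x : (fun y => y) @ within A x^' --> x.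
Proof. by apply: cvg_within_filter; apply: cvg_within_filter; exact: cvg_id. Qed.

Lemma Dw_cont f x d : Dw f x d -> f @ within A (nbhs x) --> f x.
Proof.
move=> hf; apply: cvg_within_Nx => //.
have h0 : (fun y => y - x) @ within A x^' --> 0.
  by rewrite -(subrr x); apply: cvgB (idW x) (cvg_cst x).
have := @cvgM _ _ _ (WF x) _ _ _ _ hf h0.
move=> /(@cvgD _ _ _ _ (WF x) _ _ _ _ (cvg_cst (f x))).
rewrite mulr0 addr0; apply: cvg_trans; apply: near_eq_cvg.
apply: near_withinNx => y yx Ay; change (f x + (f y - f x) / (y - x) * (y - x) = f y).
rewrite divfK ?subr_eq0 //.
by rewrite addrC subrK.
Qed.

Lemma cvgW_of f x : f @ within A (nbhs x) --> f x -> f @ within A x^' --> f x.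
Proof. by move=> h U hU; apply: withinNx_le; exact: h. Qed.

Lemma Dw_mul f g x df dg : Dw f x df -> Dw g x dg ->
  Dw (fun y => f y * g y) x (df * g x + f x * dg).
Proof.
move=> hf hg; rewrite /deriv_within.
have hgc := cvgW_of _ _ (Dw_cont _ _ _ hg).
have h1 := @cvgM _ _ _ (WF x) _ _ _ _ hf hgc.
have h2 := @cvgMl_tmp _ _ _ (WF x) _ (f x) _ hg.
have := @cvgD _ _ _ _ (WF x) _ _ _ _ h1 h2.
apply: cvg_trans; apply: near_eq_cvg.
apply: near_withinNx => y yx Ay.
change ((f y - f x) / (y - x) * g y + f x * ((g y - g x) / (y - x)) = (f y * g y - f x * g x) / (y - x)).
by rewrite mulrA mulrAC -mulrDl; congr (_ / _); ring.
Qed.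

Lemma Dw_cw f f' : (forall x, A x -> Dw f x (f' x)) -> {within A, continuous f}.
Proof. by move=> h; apply/subspace_continuousP => x Ax; exact: Dw_cont _ _ _ (h x Ax). Qed.

Lemma Dw_interior f x d : a < x -> x < b -> Dw f x d -> is_derive x 1 f d.
Proof.
move=> ax xb hd; apply/is_derive1_caratheodory.
exists (fun y => if y == x then d else (f y - f x) / (y - x)); split.
- move=> z; case: eqP => [->|/eqP zx]; first by rewrite !subrr mulr0.
  by rewrite divfK // subr_eq0.
- have nA : \forall y \near x, A y.
    by apply: filterS2 (lt_le_nbhsr ax) (lt_le_nbhsl xb) => y h1 h2; apply/andP; split.
  have hq : (fun y => (f y - f x) / (y - x)) @ x^' --> d.
    move=> U hU; have h : \forall y \near x, y != x -> A y ->
        U ((f y - f x) / (y - x)) := hd U hU.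
    have h' : \forall y \near x, y != x -> U ((f y - f x) / (y - x)).
      by apply: filterS2 h nA => y h1 h2 yx; exact: h1 yx h2.
    exact: h'.
  apply/continuous_withinNx; rewrite /= eqxx.
  apply: cvg_trans hq; apply: near_eq_cvg.
  have := nbhs_dnbhs_neq x; apply: filterS => y yx.
  by rewrite (negbTE yx).
- by rewrite eqxx.
Qed.

Lemma Dw_const e : (forall x, A x -> Dw e x 0) -> forall x, A x -> e x = e a.
Proof.
move=> h x /andP[ax xb]; have cw := @Dw_cw e (fun _ => 0) h.
have H1 : forall y, y \in `]a, x[ -> is_derive y 1 e ((fun _ => (0:R)) y).
  move=> y; rewrite in_itv /= => /andP[ay yx].
  by apply: Dw_interior => //; [exact: lt_le_trans xb|apply: h; apply/andP; split; apply: ltW => //; exact: lt_le_trans xb].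
have H2 : {within `[a, x], continuous e}.
  by apply: continuous_subspaceW cw; rewrite cI_itv; apply: subset_itv; rewrite bnd_simp.
have [c _] := MVT_segment ax H1 H2.
by rewrite mul0r => /eqP; rewrite subr_eq0 => /eqP.
Qed.

End S1.

End P1.
Import P1.

Module P2.
Section S2.
Variable R : realType.
Variables a b : R.
Hypothesis hab : a < b.
Local Notation A := (cI a b).
Local Notation Dw := (deriv_within a b).
Local Notation mu := (@lebesgue_measure R).
Implicit Types (f g h : R -> R) (x y c d df dg : R).

Lemma cw_int h x y : {within A, continuous h} -> a <= x -> y <= b ->
  mu.-integrable `[x, y] (EFin \o h).
Proof.
move=> ch ax yb; apply: continuous_compact_integrable; first exact: segment_compact.
by apply: continuous_subspaceW ch; rewrite cI_itv; apply: subset_itv; rewrite bnd_simp.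
Qed.

Definition clamp t := Num.max a (Num.min t b).

Lemma clamp_in t : A (clamp t).
Proof.
rewrite /cI /= /clamp le_max lexx /= ge_max (ltW hab) /= ge_min lexx orbT //.
Qed.

Lemma clamp_id t : A t -> clamp t = t.
Proof. by move=> /andP[ha tb]; rewrite /clamp min_l // max_r. Qed.

Lemma clamp_cont : continuous clamp.
Proof.
move=> t; rewrite /clamp.
have := @continuous_max R R (cst a) (fun t => Num.min t b) t (@cst_continuous R R a t).
apply; apply: continuous_min => //; exact: cvg_cst.
Qed.

Lemma ext_cont h : {within A, continuous h} -> continuous (h \o clamp).
Proof.
move=> /subspace_continuousP ch y; apply: cvg_comp; last exact: ch (clamp_in y).
move=> P hP; have H : nbhs y (fun z => A (clamp z) -> P (clamp z)) := @clamp_cont y _ hP.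
have H' : nbhs y (fun z => P (clamp z)) by apply: filterS H => z Hz; exact: Hz (clamp_in z).
exact: H'.
Qed.

Lemma FTCw h : {within A, continuous h} -> forall x, A x ->
  Dw (fun y => \int[mu]_(t in cI a y) h t) x (h x).
Proof.
move=> ch x Ax; have /andP[ax xb] := Ax.
pose ht := h \o clamp.
have cht : continuous ht := ext_cont h ch.
pose Gt y := \int[mu]_(t in `[(a - 1), y]) ht t.
have iht : forall u v, mu.-integrable `[u, v] (EFin \o ht).
  move=> u v; apply: continuous_compact_integrable; first exact: segment_compact.
  exact: continuous_subspaceT.
have a1x : a - 1 < x by lra.
have x1 : x < x + 1 by lra.
have := @continuous_FTC1_closed R ht (a - 1) x (x + 1) x1 (iht _ _) a1x (cht x).
move=> /= [dG G'].
have isd : is_derive x 1 Gt (h x).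
  apply: DeriveDef dG _; rewrite -derive1E G' /ht /= clamp_id //.
have hGt := @Dw_full R a b Gt x (h x) isd.
apply: (@Dw_eq R a b _ (fun y => Gt y + (- Gt a))) => //.
  move=> y Ay; have /andP[ay yb] := Ay.
  rewrite /Gt Rintegral_itvB; last 3 first.
  - exact: iht.
  - by rewrite bnd_simp; lra.
  - by rewrite bnd_simp.
  rewrite Rintegral_itv_obnd_cbnd; last first.
    apply: integrableS (iht a y) => //; apply: subset_itv; rewrite bnd_simp //.
  rewrite cI_itv; apply: eq_Rintegral => t; rewrite inE /= in_itv /= => /andP[ta ty].
  rewrite /ht /= clamp_id //; apply/andP; split => //; exact: le_trans yb.
by rewrite -[h x]addr0; apply: Dw_add => //; apply: Dw_cst.
Qed.

End S2.

End P2.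
Import P2.

Module P3.
Arguments Dw_add {R a b f g x df dg}.
Arguments Dw_mul {R a b f g x df dg}.
Arguments Dw_scale {R a b} c {f x df}.
Arguments Dw_id {R a b x}.
Arguments Dw_cst {R a b} c {x}.
Section S3.
Variable R : realType.
Variables a b : R.
Hypothesis hab : a < b.
Local Notation A := (cI a b).
Local Notation Dw := (deriv_within a b).
Local Notation mu := (@lebesgue_measure R).
Local Notation cw h := {within A, continuous h}.
Implicit Types (f g h : R -> R) (x y c d df dg : R).

Lemma cwM f g : cw f -> cw g -> cw (fun t => f t * g t).
Proof. by move=> cf cg x; exact: continuousM (cf x) (cg x). Qed.

Arguments cwM {f g}.

Lemma cwD f g : cw f -> cw g -> cw (fun t => f t + g t).
Proof. by move=> cf cg x; exact: continuousD (cf x) (cg x). Qed.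

Arguments cwD {f g}.

Lemma cw_cst c : cw (fun _ => c).
Proof. by apply: continuous_subspaceT; exact: cst_continuous. Qed.

Lemma cw_id : cw (fun t => t).
Proof. by apply: continuous_subspaceT => x; exact: cvg_id. Qed.

Lemma cwX p f : cw f -> cw (fun t => f t ^+ p).
Proof.
move=> cf; elim: p => [|p IH].
  have -> : (fun t => f t ^+ 0) = (fun _ => 1) by apply/funext => t; rewrite expr0.
  exact: cw_cst.
have -> : (fun t => f t ^+ p.+1) = (fun t => f t * f t ^+ p).
  by apply/funext => t; rewrite exprS.
exact: cwM.
Qed.

Arguments cwX p {f}.

Lemma cw_poly x p h : cw h -> cw (fun t => h t * (x - t) ^+ p).
Proof.
move=> ch; apply: cwM => //; apply: cwX.
have -> : (fun t => x - t) = (fun t => x + (-1) * t).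
  by apply/funext => t; rewrite mulN1r.
by apply: cwD; [exact: cw_cst|apply: cwM; [exact: cw_cst|exact: cw_id]].
Qed.

Arguments cw_poly x p {h}.

Definition K p h x := \int[mu]_(t in cI a x) (h t * (x - t) ^+ p).

Lemma K_rec p h x : cw h -> A x ->
  K p.+1 h x = x * K p h x + (-1) * K p (fun t => t * h t) x.
Proof.
move=> ch /andP[ax xb]; rewrite /K cI_itv.
have i1 := @cw_int R a b _ a x (cw_poly x p ch) (lexx a) xb.
have i2 := @cw_int R a b _ a x (cw_poly x p (cwM cw_id ch)) (lexx a) xb.
have i1' := @cw_int R a b (fun t => x * (h t * (x - t) ^+ p)) a x
  (cwM (cw_cst x) (cw_poly x p ch)) (lexx a) xb.
have i2' := @cw_int R a b (fun t => -1 * (t * h t * (x - t) ^+ p)) a x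
  (cwM (cw_cst (-1)) (cw_poly x p (cwM cw_id ch))) (lexx a) xb.
rewrite -(RintegralZl _ _ i1) // -(RintegralZl _ _ i2) // -(RintegralD _ i1' i2') //.
by apply: eq_Rintegral => t _; rewrite exprS; ring.
Qed.

Lemma K0D h : cw h -> forall x, A x -> Dw (K 0 h) x (h x).
Proof.
move=> ch x Ax.
have -> : K 0 h = fun y => \int[mu]_(t in cI a y) h t.
  by apply/funext => y; rewrite /K; apply: eq_Rintegral => t _; rewrite expr0 mulr1.
exact: FTCw.
Qed.

Arguments K0D {h} ch {x}.

Lemma KD p : forall h, cw h -> forall x, A x ->
  Dw (K p.+1 h) x (p.+1%:R * K p h x).
Proof.
elim: p => [|p IH] h ch x Ax.
  have ch' := cwM cw_id ch.
  apply: (@Dw_eq R a b _ (fun y => y * K 0 h y + (-1) * K 0 (fun t => t * h t) y)) => //.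
    by move=> y Ay; rewrite K_rec.
  have := Dw_add (Dw_mul Dw_id (K0D ch Ax)) (Dw_scale (-1) (K0D ch' Ax)).
  by rewrite /=; congr Dw; ring.
have ch' := cwM cw_id ch.
apply: (@Dw_eq R a b _ (fun y => y * K p.+1 h y + (-1) * K p.+1 (fun t => t * h t) y)) => //.
  by move=> y Ay; rewrite K_rec.
have := Dw_add (Dw_mul Dw_id (IH h ch x Ax)) (Dw_scale (-1) (IH _ ch' x Ax)).
rewrite /= (K_rec p h x ch Ax) -natr1; congr Dw; ring.
Qed.

End S3.

End P3.
Import P3.

Module P4.
Arguments Dw_add {R a b f g x df dg}.
Arguments Dw_mul {R a b f g x df dg}.
Arguments Dw_scale {R a b} c {f x df}.
Arguments Dw_id {R a b x}.
Arguments Dw_cst {R a b} c {x}.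
Arguments K0D {R a b} hab {h} ch {x}.
Arguments KD {R a b} hab p {h} ch {x}.
Arguments cwM {R a b f g}.
Arguments cwD {R a b f g}.
Arguments cw_poly {R a b} x p {h}.
Section S4.
Variable R : realType.
Variables a b : R.
Hypothesis hab : a < b.
Local Notation A := (cI a b).
Local Notation Dw := (deriv_within a b).
Local Notation mu := (@lebesgue_measure R).
Local Notation cw h := {within A, continuous h}.
Local Notation K := (@P3.K R a).
Implicit Types (f g h : R -> R) (x y c d df dg : R).

Lemma Dw_val f x d d' : Dw f x d -> d = d' -> Dw f x d'.
Proof. by move=> h <-. Qed.

Definition J m h x := match m with 0 => h x | m'.+1 => (m'`!%:R)^-1 * K m' h x end.

Lemma fact_neq0 k : (k`!%:R : R) != 0.
Proof. by rewrite pnatr_eq0 -lt0n fact_gt0. Qed.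

Lemma JD m h : cw h -> forall x, A x -> Dw (J m.+1 h) x (J m h x).
Proof.
move=> ch x Ax; case: m => [|p].
  apply: (@Dw_eq R a b _ (fun y => (0`!%:R)^-1 * K 0 h y)) => //.
  have H := Dw_scale (0`!%:R)^-1 (K0D hab ch Ax).
  have e : (0`!%:R^-1 * h x) = J 0 h x by rewrite /= fact0 invr1 mul1r.
  by rewrite -e.
apply: (@Dw_eq R a b _ (fun y => (p.+1`!%:R)^-1 * K p.+1 h y)) => //.
have H := Dw_scale (p.+1`!%:R)^-1 (KD hab p ch Ax).
suff e : ((p.+1)`!%:R^-1 * (p.+1%:R * K p h x)) = J p.+1 h x by rewrite -e.
rewrite /= factS natrM; field; rewrite fact_neq0 /=.
by rewrite addrC natr1 pnatr_eq0.
Qed.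

Lemma J_a m h : J m.+1 h a = 0.
Proof.
by rewrite /J /P3.K cI_itv set_itv1 Rintegral_set1 mulr0.
Qed.

Lemma Expr_eq m h x : cw h -> A x ->
  (m`!%:R)^-1 * HK_int_against a x h (fun t => (x - t) ^+ m)
     (fun t => - m%:R * (x - t) ^+ m.-1) = J m h x.
Proof.
move=> ch /andP[ax xb]; rewrite /HK_int_against subrr.
case: m => [|p].
  rewrite expr0 mulr1 /= invr1 mul1r.
  rewrite (@eq_Rintegral _ _ _ _ _ (fun _ => 0)); last by move=> t _; rewrite mulr0n oppr0 mul0r mulr0.
  by rewrite cI_itv Rintegral_cst ?mul0r ?subr0.
rewrite expr0n /= mulr0 sub0r.
have -> : \int[mu]_(t in cI a x) (h t * (- p.+1%:R * (x - t) ^+ p)) =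
    - p.+1%:R * K p h x.
  rewrite /P3.K cI_itv -RintegralZl //; last exact: (@cw_int R a b _ a x (cw_poly x p ch) (lexx a) xb).
  by apply: eq_Rintegral => t _; ring.
rewrite /= factS natrM; field; rewrite fact_neq0 /=.
by rewrite addrC natr1 pnatr_eq0.
Qed.

Definition P (c : nat -> R) N x := \sum_(k < N) c k * (x - a) ^+ k.
Definition der (c : nat -> R) k := c k.+1 * k.+1%:R.

Lemma powD N x : Dw (fun y => (y - a) ^+ N) x (N%:R * (x - a) ^+ N.-1).
Proof.
elim: N => [|N IH].
  have -> : (fun y => (y - a) ^+ 0) = (fun _ => 1) by apply/funext => y; rewrite expr0.
  by rewrite mul0r; exact: Dw_cst.
have -> : (fun y => (y - a) ^+ N.+1) = (fun y => (y - a) ^+ N * (y + (- a))).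
  by apply/funext => y; rewrite exprSr.
have H := Dw_mul IH (Dw_add (@Dw_id R a b x) (Dw_cst (- a))).
suff e : N%:R * (x - a) ^+ N.-1 * (x + - a) + (x - a) ^+ N * (1 + 0) =
  N.+1%:R * (x - a) ^+ N.+1.-1 by rewrite -e.
case: N {IH H} => [|N] /=; first by rewrite !expr0; ring.
rewrite exprSr -natr1; ring.
Qed.

Lemma PD (c : nat -> R) N x : Dw (P c N) x (P (der c) N.-1 x).
Proof.
elim: N => [|N IH].
  have -> : P c 0 = (fun _ => 0) by apply/funext => y; rewrite /P big_ord0.
  by rewrite /P big_ord0; exact: Dw_cst.
have -> : P c N.+1 = (fun y => P c N y + c N * (y - a) ^+ N).
  by apply/funext => y; rewrite /P big_ord_recr.
have H := Dw_add IH (Dw_scale (c N) (powD N x)).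
suff e : P (der c) N.-1 x + c N * (N%:R * (x - a) ^+ N.-1) = P (der c) N.+1.-1 x by rewrite -e.
case: N {IH H} => [|N] /=; first by rewrite /P big_ord0 mul0r mulr0 addr0.
by rewrite [in RHS]/P big_ord_recr /= /der; congr (_ + _); ring.
Qed.

Lemma P_a (c : nat -> R) N : P c N.+1 a = c 0%N.
Proof.
rewrite /P big_ord_recl /= subrr expr0 mulr1 big1 ?addr0 //.
by move=> i _; rewrite expr0n /= mulr0.
Qed.

End S4.

End P4.
Import P4.

Module P5.
Arguments Dw_add {R a b f g x df dg}.
Arguments Dw_scale {R a b} c {f x df}.
Arguments cwD {R a b f g}.
Arguments JD {R a b} hab m {h} ch {x}.
Section S5.
Variable R : realType.
Variables a b : R.
Hypothesis hab : a < b.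
Local Notation A := (cI a b).
Local Notation Dw := (deriv_within a b).
Local Notation mu := (@lebesgue_measure R).
Local Notation cw h := {within A, continuous h}.
Local Notation J := (@J R a).
Local Notation P := (@P R a).
Implicit Types (f g h : R -> R) (x y d df dg : R).

Lemma Cn_eq n f g : (forall x, A x -> f x = g x) -> Cn a b n g -> Cn a b n f.
Proof.
move=> fg [D [D0 [hD hc]]]; exists (fun k => if k is 0 then f else D k).
split => //; split.
  move=> k kn x Ax; case: k kn => [|k] kn /=; last exact: hD.
  by apply: (@Dw_eq R a b f g) => //; rewrite -D0; exact: hD.
case: (n.-1) hc => [|k] hc //=.
rewrite D0 in hc; apply: (subspace_eq_continuous _ hc).
by move=> y; rewrite inE => Ay; rewrite /from_subspace fg.
Qed.

Lemma taylor m : forall D : nat -> R -> R,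
  (forall k, (k < m)%N -> forall x, A x -> Dw (D k) x (D k.+1 x)) ->
  cw (D m) -> forall x, A x ->
  D 0%N x = J m (fun t => D m t - D m a) x + P (fun k => D k a / k`!%:R) m.+1 x.
Proof.
elim: m => [|m IH] D hD hc x Ax.
  by rewrite /= /P4.P big_ord1 /= fact0 divr1 expr0 mulr1 subrK.
have IH' := IH (fun k => D k.+1) (fun k km => hD k.+1 km) hc.
set F := fun t => D m.+1 t - D m.+1 a.
have cF : cw F by rewrite /F; exact: (cwD hc (@cw_cst R a b (- D m.+1 a))).
set cc := fun k => D k a / k`!%:R.
pose e y := D 0%N y + (-1) * (J m.+1 F y + P cc m.+2 y).
have he : forall y, A y -> Dw e y 0.
  move=> y Ay.
  have H := Dw_add (hD 0%N erefl y Ay) (Dw_scale (-1) (Dw_add (JD hab m cF Ay) (@PD R a b cc m.+2 y))).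
  suff E : D 1%N y + (-1) * (J m F y + P (@der R cc) m.+2.-1 y) = 0 by rewrite -E.
  rewrite (IH' y Ay) /=.
  have -> : P (@der R cc) m.+1 y = P (fun k => D k.+1 a / k`!%:R) m.+1 y.
    apply: eq_bigr => k _; rewrite /der /cc factS natrM; congr (_ * _).
    field; rewrite fact_neq0 /=; by rewrite addrC natr1 pnatr_eq0.
  ring.
have := @Dw_const R a b e he x Ax.
rewrite /e J_a P_a /cc fact0 divr1 add0r !mulN1r subrr => /eqP.
by rewrite subr_eq0 => /eqP.
Qed.

End S5.

End P5.
Import P5.
Arguments Dw_add {R a b f g x df dg}.
Arguments cwD {R a b f g}.
Arguments JD {R a b} hab m {h} ch {x}.
Arguments Expr_eq {R a b} m {h x} ch Ax.
Arguments Cn_eq {R a b n f g}.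
Arguments taylor {R a b} hab m D.

Theorem lemma4p16 (R : realType) (a b : R) (hab : a < b) (n : nat)
    (hn : (0 < n)%N) (f : R -> R) :
  Cn a b n f <->
  exists phi : (R -> R) -> R, D_HK a b phi /\
  exists F : R -> R, C0 a b F /\ distr_deriv_of a b phi F /\
  exists c : 'I_n -> R,
    forall x : R, cI a b x ->
      f x = (n.-1)`!%:R^-1 *
              HK_int_against a x F (fun t => (x - t) ^+ n.-1)
                (fun t => - (n.-1)%:R * (x - t) ^+ n.-2)
            + \sum_(k < n) c k * (x - a) ^+ k.
Proof.
case: n hn => [//|m] _ /=; split.
  move=> [D [D0 [hD hc]]] /=.
  have hD' : forall k, (k < m)%N -> forall x, cI a b x ->
      deriv_within a b (D k) x (D k.+1 x) := fun k km => hD k km.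
  pose F := fun t => D m t - D m a.
  have cF : {within cI a b, continuous F}.
    by rewrite /F; exact: (cwD hc (@cw_cst R a b (- D m a))).
  have C0F : C0 a b F by split => //; rewrite /F subrr.
  exists (fun psi => - \int[lebesgue_measure]_(t in cI a b) (F t * derive1 psi t)).
  split; first by exists F; split.
  exists F; split => //; split => //.
  exists (fun k : 'I_m.+1 => D k a / k`!%:R) => x Ax.
  rewrite (Expr_eq m cF Ax) -D0.
  exact: (taylor hab m D hD' hc x Ax).
move=> [phi [_ [F [[cF Fa] [_ [c hf]]]]]].
pose cc k := c (inord k).
have hf' : forall x, cI a b x -> f x = @J R a m F x + @P R a cc m.+1 x.
  move=> x Ax; rewrite hf // (Expr_eq m cF Ax); congr (_ + _).
  by apply: eq_bigr => k _; rewrite /cc inord_val.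
apply: (Cn_eq hf').
pose D j := fun y => @J R a (m - j) F y + @P R a (iter j (@der R) cc) (m.+1 - j) y.
apply: (@Cn_eq R a b m.+1 _ (D 0%N)) => [y _|]; first by rewrite /D subn0.
exists D; split => //; split.
  move=> k km x Ax.
  have km' : (k < m)%N by [].
  rewrite /D -(subnSK km').
  have := Dw_add (JD hab (m - k.+1) cF Ax) (@PD R a b (iter k (@der R) cc) (m.+1 - k) x).
  by rewrite [(m.+1 - k.+1)%N]subnS.
rewrite /= /D subnn subSnn.
apply: cwD => //.
exact: (@Dw_cw R a b _ _ (fun y _ => @PD R a b (iter m (@der R) cc) 1 y)).
Qed.
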